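(* If an $n$-Brinkhuis $(2,1,1)$-triple exists, then $n>17$.
   Context: Let $\Sigma=\{0,1,2\}$. A word over $\Sigma$ is square-free if it cannot be written as $xyyz$ with $y$ nonempty. $\mathcal{A}(n)$ is the set of square-free words of length $n$. An $n$-Brinkhuis $(k_0,k_1,k_2)$-triple, where $k_0,k_1,k_2\ge1$, consists of three sets $\mathcal{B}^{(i)}=\{w^{(i)}_j: 1\le j\le k_i\}\subset\mathcal{A}(n)$ for $i\in\{0,1,2\}$. Each $\mathcal{B}^{(i)}$ has $k_i$ distinct square-free words of length $n$. The defining condition: for every square-free word $ii'i''\in\mathcal{A}(3)$ and all $1\le j\le k_i$, $1\le j'\le k_{i'}$, $1\le j''\le k_{i''}$, the concatenation $w^{(i)}_jw^{(i')}_{j'}w^{(i'')}_{j''}$ is square-free. *)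

(* Defs.v *)
From mathcomp Require Import all_boot.
Set Implicit Arguments. Unset Strict Implicit. Unset Printing Implicit Defensive.

Definition letter := 'I_3.
Definition word := seq letter.

Definition square_free (w : word) : Prop :=
  ~ exists x y z : word, y != [::] /\ w = x ++ y ++ y ++ z.

Definition in_A (n : nat) (w : word) : Prop := size w = n /\ square_free w.

Definition brinkhuis_triple (n : nat) (k : 'I_3 -> nat) (B : 'I_3 -> seq word) : Prop :=
  (forall i, 1 <= k i) /\
  (forall i, size (B i) = k i /\ uniq (B i) /\ forall w, w \in B i -> in_A n w) /\
  (forall i i' i'' : 'I_3, in_A 3 [:: i; i'; i''] ->
     forall u u' u'', u \in B i -> u' \in B i' -> u'' \in B i'' ->
       square_free (u ++ u' ++ u'')).

Definition k211 : 'I_3 -> nat := fun i => if val i == 0 then 2 else 1.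

(* Main.v *)
Require Import Defs.
From mathcomp Require Import all_boot.
From mathcomp Require Import zify.
Set Implicit Arguments. Unset Strict Implicit. Unset Printing Implicit Defensive.
Definition Qsq (T : Type) (s : seq T) : Prop :=
  exists x y z : seq T, size y > 0 /\ s = x ++ y ++ y ++ z.
Definition Psq (T : Type) (s : seq T) : Prop :=
  exists i k, 0 < k /\ i + k + k <= size s /\ take k (drop i s) = take k (drop (i + k) s).

Lemma Q_P (T : Type) (s : seq T) : Qsq s <-> Psq s.
Proof.
split.
- move=> [x [y [z [Hy ->]]]]; exists (size x), (size y); split=> //; split.
    by rewrite !size_cat; lia.
  rewrite drop_size_cat // take_size_cat //.
  by rewrite catA drop_size_cat ?size_cat // take_size_cat.
- move=> [i [k [Hk [Hs He]]]].
  exists (take i s), (take k (drop i s)), (drop (i + k + k) s).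
  have Hsz : size (take k (drop i s)) = k by rewrite size_takel // size_drop; lia.
  split; first by rewrite Hsz.
  rewrite -{1}(cat_take_drop i s); congr (_ ++ _).
  rewrite -{1}(cat_take_drop k (drop i s)); congr (_ ++ _).
  rewrite drop_drop addnC He.
  rewrite -{1}(cat_take_drop k (drop (i + k) s)); congr (_ ++ _).
  by rewrite drop_drop; congr drop; lia.
Qed.

Lemma P_map (T1 T2 : Type) (f : T1 -> T2) (s : seq T1) :
  injective f -> Psq (map f s) <-> Psq s.
Proof.
move=> inj; split; move=> [i [k [Hk [Hs He]]]]; exists i, k; split=> //;
  rewrite ?size_map in Hs *; split=> //.
  by apply: (inj_map inj); rewrite !map_take !map_drop.
by rewrite -!map_drop -!map_take He.
Qed.

Lemma Q_factor (T : Type) (s1 s2 s3 : seq T) : Qsq s2 -> Qsq (s1 ++ s2 ++ s3).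
Proof.
move=> [x [y [z [Hy ->]]]]; exists (s1 ++ x), y, (z ++ s3); split=> //.
by rewrite !catA.
Qed.
Fixpoint prefeq (l : nat) (t u : seq nat) : bool :=
  match l, t, u with
  | 0, _, _ => true
  | l'.+1, x :: t', y :: u' => if eqn x y then prefeq l' t' u' else false
  | _, _, _ => false
  end.
Fixpoint sqgo (t u : seq nat) (l : nat) : bool :=
  match u with [::] => false | _ :: u' => if prefeq l t u then true else sqgo t u' l.+1 end.
Definition sqpre (t : seq nat) := sqgo t (behead t) 1.
Fixpoint sfb (s : seq nat) : bool :=
  if s is x :: s' then (if sqpre s then false else sfb s') else true.

Lemma prefeqE l t u :
  prefeq l t u = [&& l <= size t, l <= size u & take l t == take l u].
Proof.
elim: l t u => [|l IH] [|x t] [|y u] //=; first by rewrite andbF.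
rewrite IH eqseq_cons !ltnS.
case: eqnP => [->|Hne]; first by rewrite eqxx.
have E: (x == y) = false by apply/eqP.
by rewrite E !andbF.
Qed.

Lemma sqgoE t u l : u = drop l t ->
  sqgo t u l = has (fun k => prefeq k t (drop k t)) (iota l (size u)).
Proof.
elim: u l => [|y u IH] l Hu //=.
rewrite -Hu IH //.
by rewrite -add1n -drop_drop -Hu /= drop0.
Qed.

Lemma sqpreP t : reflect (exists k, 0 < k /\ k + k <= size t /\ take k t = take k (drop k t)) (sqpre t).
Proof.
rewrite /sqpre sqgoE; last by rewrite drop1.
rewrite size_behead.
apply: (iffP hasP).
- move=> [k]; rewrite mem_iota prefeqE size_drop => /andP [H1 H2] /and3P [_ H3 /eqP H4].
  exists k; split; first by [].
  split=> //; lia.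
- move=> [k [H1 [H2 H3]]]; exists k.
    rewrite mem_iota; apply/andP; split=> //; lia.
  rewrite prefeqE size_drop H3 eqxx andbT; apply/andP; split; lia.
Qed.

Lemma sfbP s : reflect (~ Psq s) (sfb s).
Proof.
elim: s => [|x s IH] /=.
  by apply: ReflectT => -[i [k [H1 [H2 _]]]]; move: H2 => /=; lia.
case: (sqpreP (x :: s)) => Hpre.
  apply: ReflectF => H; apply: H; move: Hpre => [k [H1 [H2 H3]]].
  by exists 0, k; rewrite drop0 add0n.
case: IH => IH.
  apply: ReflectT => -[i [k [H1 [H2 H3]]]].
  case: i H2 H3 => [|i] H2 H3.
    by apply: Hpre; exists k; rewrite drop0 add0n in H3; split.
  by apply: IH; exists i, k; split=> //.
apply: ReflectF => H; apply: IH => -[i [k [H1 [H2 H3]]]]; apply: H.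
by exists i.+1, k; split=> //.
Qed.

Lemma sf_iff (w : word) : square_free w <-> sfb (map val w).
Proof.
split.
- move=> H; apply/sfbP => HP; apply: H.
  have /Q_P [x [y [z [Hy E]]]] : Psq w by apply/(P_map _ val_inj).
  by exists x, y, z; split=> //; case: y Hy {E}.
- move/sfbP => H [x [y [z [Hy E]]]]; apply: H; apply/(P_map _ val_inj)/Q_P.
  by exists x, y, z; split=> //; case: y Hy {E}.
Qed.

Lemma sfb_mid s1 s2 s3 : sfb (s1 ++ s2 ++ s3) -> sfb s2.
Proof.
move/sfbP => H; apply/sfbP => /Q_P HQ; apply: H; apply/Q_P; exact: Q_factor.
Qed.

Lemma sfb_catl s1 s2 : sfb (s1 ++ s2) -> sfb s1.
Proof. by move=> H; apply: (@sfb_mid [::] s1 s2). Qed.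

Lemma sfb_catr s1 s2 : sfb (s1 ++ s2) -> sfb s2.
Proof. by move=> H; apply: (@sfb_mid s1 s2 [::]); rewrite cats0. Qed.

Lemma sfb_pair a b : sfb (a ++ b ++ a) -> sfb (a ++ b).
Proof. by rewrite catA => /sfb_catl. Qed.

Definition letters := [:: 0; 1; 2].
Fixpoint wordsn n : seq (seq nat) :=
  if n is n'.+1 then let W := wordsn n' in [seq w <- [seq x :: w | x <- letters, w <- W] | ~~ sqpre w]
  else [:: [::]].

Lemma wordsn_complete n s : all (fun x => x < 3) s -> size s = n -> sfb s -> s \in wordsn n.
Proof.
elim: n s => [|n IH] [|x s] //= /andP [Hx Ha] [Hs].
case Hp: (sqpre (x :: s)) => // Hsf.
rewrite mem_filter Hp /=.
have Hw := IH _ Ha Hs Hsf; have Hi : forall k : nat, injective (@cons nat k) by move=> k u v [].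


by clear Hp; move: Hx; case: x => [|[|[|]]] //= _; rewrite !mem_cat !(mem_map (Hi _)) Hw ?orbT.
Qed.

Notation "a &&& b" := (if a then b else false) (at level 45, right associativity).
Definition comp (a b : seq nat) := sfb (drop (size a - 6) a ++ take 6 b) &&& sfb (drop (size b - 6) b ++ take 6 a).

Lemma comp_ok a b : sfb (a ++ b) -> sfb (b ++ a) -> comp a b.
Proof.
move=> H1 H2; rewrite /comp.
have F : forall u v, sfb (u ++ v) -> sfb (drop (size u - 6) u ++ take 6 v).
  move=> u v H; apply: (@sfb_mid (take (size u - 6) u) _ (drop 6 v)).
  by rewrite -catA catA !cat_take_drop.
by rewrite (F _ _ H1) (F _ _ H2).
Qed.

Definition chk n :=
  let W := wordsn n in
  has (fun b =>
   let Ab := [seq a <- W | comp a b &&& sfb (a ++ b) &&& sfb (b ++ a) &&& sfb (a ++ b ++ a) &&& sfb (b ++ a ++ b)] in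
   has (fun c =>
     let A2 := [seq a <- Ab | comp a c &&& sfb (a ++ c) &&& sfb (c ++ a) &&& sfb (a ++ c ++ a) &&& sfb (c ++ a ++ c)
        &&& sfb (a ++ b ++ c) &&& sfb (a ++ c ++ b) &&& sfb (b ++ a ++ c) &&& sfb (b ++ c ++ a)
        &&& sfb (c ++ a ++ b) &&& sfb (c ++ b ++ a)] in
     has (fun x => has (fun y => (x != y) &&& sfb (x ++ b ++ y) &&& sfb (x ++ c ++ y)) A2) A2) Ab) W.

Lemma chk_small : all (fun m => ~~ chk m) (iota 0 18).
Proof. vm_compute. reflexivity. Qed.

Definition L0 : 'I_3 := @Ordinal 3 0 isT.
Definition L1 : 'I_3 := @Ordinal 3 1 isT.
Definition L2 : 'I_3 := @Ordinal 3 2 isT.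

Theorem lemma4 (n : nat) :
  (exists B : 'I_3 -> seq word, brinkhuis_triple n k211 B) -> 17 < n.
Proof.
move=> [B [_ [HB HT]]].
rewrite ltnNge; apply/negP => Hn.
have Hc : ~~ chk n.
  by move/allP: chk_small => /(_ n); apply; rewrite mem_iota.
move/negP: Hc; apply.
pose mv (u : word) := map (@nat_of_ord 3) u.
have Wb : forall i u, u \in B i -> mv u \in wordsn n.
  move=> i u Hu; have [_ [_ /(_ u Hu) [Hs Hsf]]] := HB i.
  apply: wordsn_complete; last by apply/sf_iff.
    by rewrite all_map; apply/allP => x _ /=.
  by rewrite size_map.
have T3 : forall i i' i'' u u' u'', in_A 3 [:: i; i'; i''] -> u \in B i -> u' \in B i' ->
   u'' \in B i'' -> sfb (mv u ++ mv u' ++ mv u'').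
  move=> i i' i'' u u' u'' H3 H H' H''; rewrite -!map_cat; apply/sf_iff; exact: HT H3 _ _ _ H H' H''.
have A3 : forall i i' i'' : 'I_3, sfb [:: val i; val i'; val i''] -> in_A 3 [:: i; i'; i''].
  by move=> i i' i'' H; split=> //; apply/sf_iff.
have [s0 [u0 m0]] := HB L0.
have [s1 [_ m1]] := HB L1.
have [s2 [_ m2]] := HB L2.
move: s0 u0 m0; case E0: (B L0) => [|x [|y []]] //= _ /andP [Hxy _] _.
move: s1 m1; case E1: (B L1) => [|b []] //= _ _.
move: s2 m2; case E2: (B L2) => [|c []] //= _ _.
have x0 : x \in B L0 by rewrite E0 inE eqxx.
have y0 : y \in B L0 by rewrite E0 !inE eqxx orbT.
have b1 : b \in B L1 by rewrite E1 inE eqxx.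
have c2 : c \in B L2 by rewrite E2 inE eqxx.
have t : forall i i' i'' u u' u'', sfb [:: val i; val i'; val i''] -> u \in B i -> u' \in B i' ->
   u'' \in B i'' -> sfb (mv u ++ mv u' ++ mv u'').
  by move=> i i' i'' u u' u'' H; apply: T3; apply: A3.
have Hbcb := t L1 L2 L1 _ _ _ isT b1 c2 b1.
have Hcbc := t L2 L1 L2 _ _ _ isT c2 b1 c2.
have G : forall a, a \in B L0 ->
  sfb (mv a ++ mv b ++ mv a) /\ sfb (mv b ++ mv a ++ mv b) /\ sfb (mv a ++ mv c ++ mv a) /\
  sfb (mv c ++ mv a ++ mv c) /\ sfb (mv a ++ mv b ++ mv c) /\ sfb (mv a ++ mv c ++ mv b) /\
  sfb (mv b ++ mv a ++ mv c) /\ sfb (mv b ++ mv c ++ mv a) /\ sfb (mv c ++ mv a ++ mv b) /\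
  sfb (mv c ++ mv b ++ mv a).
  move=> a a0.
  split; first exact: (t L0 L1 L0 _ _ _ isT a0 b1 a0).
  split; first exact: (t L1 L0 L1 _ _ _ isT b1 a0 b1).
  split; first exact: (t L0 L2 L0 _ _ _ isT a0 c2 a0).
  split; first exact: (t L2 L0 L2 _ _ _ isT c2 a0 c2).
  split; first exact: (t L0 L1 L2 _ _ _ isT a0 b1 c2).
  split; first exact: (t L0 L2 L1 _ _ _ isT a0 c2 b1).
  split; first exact: (t L1 L0 L2 _ _ _ isT b1 a0 c2).
  split; first exact: (t L1 L2 L0 _ _ _ isT b1 c2 a0).
  split; first exact: (t L2 L0 L1 _ _ _ isT c2 a0 b1).
  exact: (t L2 L1 L0 _ _ _ isT c2 b1 a0).
have inAb : forall a, a \in B L0 -> (mv a \in [seq a <- wordsn n | comp a (mv b) &&& sfb (a ++ (mv b)) &&& sfb ((mv b) ++ a) &&& sfb (a ++ (mv b) ++ a) &&& sfb ((mv b) ++ a ++ (mv b))]).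
  move=> a a0; have [H1 [H2 _]] := G a a0.
  rewrite mem_filter (Wb _ _ a0) andbT.
  by rewrite comp_ok ?(sfb_pair H1) ?(sfb_pair H2) // H1 H2.
rewrite /chk; apply/hasP; exists (mv b); first exact: Wb b1.
apply/hasP; exists (mv c).
  rewrite mem_filter (Wb _ _ c2) andbT.
  by rewrite comp_ok ?(sfb_pair Hcbc) ?(sfb_pair Hbcb) // Hcbc Hbcb.
have inA2 : forall a, a \in B L0 -> mv a \in [seq a <- [seq a <- wordsn n | comp a (mv b) &&& sfb (a ++ (mv b)) &&& sfb ((mv b) ++ a) &&& sfb (a ++ (mv b) ++ a) &&& sfb ((mv b) ++ a ++ (mv b))] | comp a (mv c) &&& sfb (a ++ (mv c)) &&& sfb ((mv c) ++ a) &&& sfb (a ++ (mv c) ++ a) &&& sfb ((mv c) ++ a ++ (mv c))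
        &&& sfb (a ++ (mv b) ++ (mv c)) &&& sfb (a ++ (mv c) ++ (mv b)) &&& sfb ((mv b) ++ a ++ (mv c)) &&& sfb ((mv b) ++ (mv c) ++ a)
        &&& sfb ((mv c) ++ a ++ (mv b)) &&& sfb ((mv c) ++ (mv b) ++ a)].
  move=> a a0; have [H1 [H2 [H3 [H4 [H5 [H6 [H7 [H8 [H9 H10]]]]]]]]] := G a a0.
  rewrite mem_filter (inAb _ a0) andbT.
  by rewrite comp_ok ?(sfb_pair H3) ?(sfb_pair H4) // H3 H4 H5 H6 H7 H8 H9 H10.
apply/hasP; exists (mv x); first exact: inA2.
apply/hasP; exists (mv y); first exact: inA2.
have -> : (mv x != mv y) = true by rewrite (inj_eq (inj_map val_inj)); move: Hxy; rewrite inE.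
by rewrite (t L0 L1 L0 _ _ _ isT x0 b1 y0) (t L0 L2 L0 _ _ _ isT x0 c2 y0).
Qed.
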